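(* Let $\mathfrak K=(K,\bigsqcup,\odot,{}^*,{\sim},e)$ be a semi-Foulis dynamic algebra and $u\in\widetilde K$. Then the map $u\bullet(-)\colon\widetilde K\to\widetilde K$ equals the Sasaki projection $\pi_u$ of the orthomodular lattice $(\widetilde K,\preceq,{}^\perp)$, i.e. $u\bullet v=u\wedge(u^\perp\vee v)$ for all $v\in\widetilde K$.
   Context: An involutive unital quantale is $(Q,\bigsqcup,\odot,{}^*,e)$: $Q$ a complete join-semilattice, $\odot$ associative and distributing over arbitrary joins in each argument, $e$ a unit, ${}^*$ with $x^{**}=x$, $(x\odot y)^*=y^*\odot x^*$, $(\bigsqcup_i x_i)^*=\bigsqcup_i x_i^*$. An involutive generalized dynamic algebra is $\mathfrak K=(K,\bigsqcup,\odot,{}^*,{\sim},e)$ with $(K,\bigsqcup,\odot,{}^*,e)$ an involutive unital quantale and ${\sim}\colon K\to K$ such that for all $x,y\in K$ and families $(x_i)$: ${\sim}(x\odot{\sim}{\sim}y)={\sim}(x\odot y)$; ${\sim}(\bigsqcup_i{\sim}{\sim}x_i)={\sim}(\bigsqcup_i x_i)$; $({\sim}x)^*={\sim}x$; ${\sim}{\sim}({\sim}{\sim}x\odot y)={\sim}({\sim}x\sqcup{\sim}({\sim}x\sqcup y))$. Test set $\widetilde K=\{{\sim}k\mid k\in K\}$; for $W\subseteq\widetilde K$, $\bigvee W={\sim}{\sim}(\bigsqcup W)$; $w^\perp={\sim}w$; $k\preceq l$ iff $\bigvee\{k,l\}=l$; action $k\bullet v={\sim}{\sim}(k\odot v)$.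 It is a semi-Foulis dynamic algebra if $(\widetilde K,\preceq,{}^\perp)$ is a complete orthomodular lattice. In an orthomodular lattice the Sasaki projection onto $u$ is $\pi_u(x)=u\wedge(u^\perp\vee x)$. *)

(* Defs.v *)
Section Defs.
Context {K : Type}.

Definition pair_set (x y : K) : K -> Prop := fun z => z = x \/ z = y.
Definition image_set (f : K -> K) (S : K -> Prop) : K -> Prop :=
  fun z => exists s, S s /\ z = f s.

Definition sup_le (sup : (K -> Prop) -> K) (x y : K) : Prop := sup (pair_set x y) = y.

Definition is_lub_in (C : K -> Prop) (le : K -> K -> Prop) (S : K -> Prop) (m : K) : Prop :=
  C m /\ (forall s, S s -> le s m) /\ (forall b, C b -> (forall s, S s -> le s b) -> le m b).
Definition is_glb_in (C : K -> Prop) (le : K -> K -> Prop) (S : K -> Prop) (m : K) : Prop :=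
  C m /\ (forall s, S s -> le m s) /\ (forall b, C b -> (forall s, S s -> le b s) -> le b m).

Definition all_K : K -> Prop := fun _ => True.

Definition complete_join_semilattice (sup : (K -> Prop) -> K) : Prop :=
  (forall x, sup_le sup x x) /\
  (forall x y, sup_le sup x y -> sup_le sup y x -> x = y) /\
  (forall x y z, sup_le sup x y -> sup_le sup y z -> sup_le sup x z) /\
  (forall S, is_lub_in all_K (sup_le sup) S (sup S)).

Definition involutive_unital_quantale (sup : (K -> Prop) -> K) (mul : K -> K -> K)
  (inv : K -> K) (e : K) : Prop :=
  complete_join_semilattice sup /\
  (forall x y z, mul x (mul y z) = mul (mul x y) z) /\
  (forall x S, mul x (sup S) = sup (image_set (fun s => mul x s) S)) /\
  (forall x S, mul (sup S) x = sup (image_set (fun s => mul s x) S)) /\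
  (forall x, mul e x = x) /\ (forall x, mul x e = x) /\
  (forall x, inv (inv x) = x) /\
  (forall x y, inv (mul x y) = mul (inv y) (inv x)) /\
  (forall S, inv (sup S) = sup (image_set inv S)).

Definition IGDA (sup : (K -> Prop) -> K) (mul : K -> K -> K) (inv : K -> K)
  (neg : K -> K) (e : K) : Prop :=
  involutive_unital_quantale sup mul inv e /\
  (forall x y, neg (mul x (neg (neg y))) = neg (mul x y)) /\
  (forall S, neg (sup (image_set (fun x => neg (neg x)) S)) = neg (sup S)) /\
  (forall x, inv (neg x) = neg x) /\
  (forall x y, neg (neg (mul (neg (neg x)) y))
               = neg (sup (pair_set (neg x) (neg (sup (pair_set (neg x) y)))))).

Definition tests (neg : K -> K) : K -> Prop := fun t => exists k, t = neg k.

Definition tjoin (sup : (K -> Prop) -> K) (neg : K -> K) (W : K -> Prop) : K :=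
  neg (neg (sup W)).

Definition tle (sup : (K -> Prop) -> K) (neg : K -> K) (k l : K) : Prop :=
  tjoin sup neg (pair_set k l) = l.

Definition act (mul : K -> K -> K) (neg : K -> K) (k v : K) : K := neg (neg (mul k v)).

Definition complete_OML (C : K -> Prop) (le : K -> K -> Prop) (perp : K -> K) : Prop :=
  (forall x, C x -> le x x) /\
  (forall x y, C x -> C y -> le x y -> le y x -> x = y) /\
  (forall x y z, C x -> C y -> C z -> le x y -> le y z -> le x z) /\
  (forall S, (forall s, S s -> C s) -> exists m, is_lub_in C le S m) /\
  (forall S, (forall s, S s -> C s) -> exists m, is_glb_in C le S m) /\
  (forall x, C x -> C (perp x)) /\
  (forall x, C x -> perp (perp x) = x) /\
  (forall x y, C x -> C y -> le x y -> le (perp y) (perp x)) /\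
  (forall x b, C x -> is_glb_in C le (pair_set x (perp x)) b ->
               forall y, C y -> le b y) /\
  (forall x t, C x -> is_lub_in C le (pair_set x (perp x)) t ->
               forall y, C y -> le y t) /\
  (forall x y m, C x -> C y -> le x y ->
     is_glb_in C le (pair_set (perp x) y) m ->
     is_lub_in C le (pair_set x m) y).

Definition semi_Foulis (sup : (K -> Prop) -> K) (mul : K -> K -> K) (inv : K -> K)
  (neg : K -> K) (e : K) : Prop :=
  IGDA sup mul inv neg e /\ complete_OML (tests neg) (tle sup neg) neg.

End Defs.

(* Main.v *)
Require Import Defs.

Section S.
Context {K : Type} (sup : (K -> Prop) -> K) (mul : K -> K -> K)
  (inv : K -> K) (neg : K -> K) (e : K).
Hypothesis HK : semi_Foulis sup mul inv neg e.

Let le := sup_le sup.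
Let J2 a b := sup (pair_set a b).

Lemma le_refl x : le x x.
Proof. destruct HK as [[[[H _] _] _] _]. apply H. Qed.
Lemma le_anti x y : le x y -> le y x -> x = y.
Proof. destruct HK as [[[[_ [H _]] _] _] _]. apply H. Qed.
Lemma le_trans x y z : le x y -> le y z -> le x z.
Proof. destruct HK as [[[[_ [_ [H _]]] _] _] _]. apply H. Qed.
Lemma sup_lub S : is_lub_in all_K le S (sup S).
Proof. destruct HK as [[[[_ [_ [_ H]]] _] _] _]. apply H. Qed.

Lemma sup_ext S S' : (forall x, S x <-> S' x) -> sup S = sup S'.
Proof.
  intro H. destruct (sup_lub S) as [_ [U1 L1]]. destruct (sup_lub S') as [_ [U2 L2]].
  apply le_anti.
  - apply L1; [exact I|]. intros s Hs. apply U2, H, Hs.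
  - apply L2; [exact I|]. intros s Hs. apply U1, H, Hs.
Qed.

Lemma ub1 a b : le a (J2 a b).
Proof. destruct (sup_lub (pair_set a b)) as [_ [U _]]. apply U. left; auto. Qed.
Lemma ub2 a b : le b (J2 a b).
Proof. destruct (sup_lub (pair_set a b)) as [_ [U _]]. apply U. right; auto. Qed.
Lemma lst a b c : le a c -> le b c -> le (J2 a b) c.
Proof.
  intros H1 H2. destruct (sup_lub (pair_set a b)) as [_ [_ L]]. apply L; [exact I|].
  intros s [->| ->]; auto.
Qed.

Lemma J2_idl a b : J2 a (J2 a b) = J2 a b.
Proof. apply le_anti. apply lst. apply ub1. apply le_refl. apply ub2. Qed.
Lemma J2_idr a b : J2 b (J2 a b) = J2 a b.
Proof. apply le_anti. apply lst. apply ub2. apply le_refl. apply ub2. Qed.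
Lemma J2_assoc a b c : J2 (J2 a b) c = J2 a (J2 b c).
Proof.
  apply le_anti.
  - apply lst. apply lst. apply ub1. eapply le_trans; [apply ub1|apply ub2].
    eapply le_trans; [apply ub2|apply ub2].
  - apply lst. eapply le_trans; [apply ub1|apply ub1].
    apply lst. eapply le_trans; [apply ub2|apply ub1]. apply ub2.
Qed.

Lemma nn t : tests neg t -> neg (neg t) = t.
Proof. destruct HK as [_ O]. unfold complete_OML in O. intuition. Qed.

Lemma A2' x y : neg (J2 (neg (neg x)) (neg (neg y))) = neg (J2 x y).
Proof.
  destruct HK as [[_ [_ [A2 _]]] _]. unfold J2. rewrite <- (A2 (pair_set x y)).
  f_equal. apply sup_ext. intro z. unfold image_set, pair_set. split.
  - intros [->| ->]; [exists x|exists y]; auto.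
  - intros [s [[->| ->] ->]]; auto.
Qed.

Lemma A2r a X : tests neg a -> neg (J2 a (neg (neg X))) = neg (J2 a X).
Proof. intro Ha. pose proof (A2' a X) as H. rewrite (nn a Ha) in H. exact H. Qed.
Lemma A2l X c : tests neg c -> neg (J2 (neg (neg X)) c) = neg (J2 X c).
Proof. intro Hc. pose proof (A2' X c) as H. rewrite (nn c Hc) in H. exact H. Qed.

Lemma tjoin_lub a b : tests neg a -> tests neg b ->
  is_lub_in (tests neg) (tle sup neg) (pair_set a b) (neg (neg (J2 a b))).
Proof.
  intros Ha Hb. split; [eexists; reflexivity|]. split.
  - intros s [->| ->]; unfold tle, tjoin.
    + fold (J2 a (neg (neg (J2 a b)))). rewrite A2r by auto. rewrite J2_idl. reflexivity.
    + fold (J2 b (neg (neg (J2 a b)))). rewrite A2r by auto. rewrite J2_idr. reflexivity.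
  - intros c Hc U. assert (H1 := U a (or_introl eq_refl)). assert (H2 := U b (or_intror eq_refl)).
    unfold tle, tjoin in *. fold (J2 a c) in H1. fold (J2 b c) in H2.
    fold (J2 (neg (neg (J2 a b))) c).
    rewrite A2l by auto. rewrite J2_assoc. rewrite <- A2r by auto. rewrite H2. exact H1.
Qed.

Lemma OML : complete_OML (tests neg) (tle sup neg) neg.
Proof. destruct HK as [_ O]. exact O. Qed.

Lemma tle_anti x y : tests neg x -> tests neg y -> tle sup neg x y -> tle sup neg y x -> x = y.
Proof. destruct OML as [_ [H _]]. apply H. Qed.
Lemma anti_mono x y : tests neg x -> tests neg y -> tle sup neg x y -> tle sup neg (neg y) (neg x).
Proof. destruct OML as [_ [_ [_ [_ [_ [_ [_ [H _]]]]]]]]. apply H. Qed.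
Lemma neg_test x : tests neg (neg x).
Proof. eexists; reflexivity. Qed.

Lemma demorgan a b : tests neg a -> tests neg b ->
  is_glb_in (tests neg) (tle sup neg) (pair_set (neg a) (neg b)) (neg (J2 a b)).
Proof.
  intros Ha Hb. destruct (tjoin_lub a b Ha Hb) as [Hm [U L]].
  assert (E : neg (J2 a b) = neg (neg (neg (J2 a b)))) by (rewrite nn; auto using neg_test).
  split; [apply neg_test|]. split.
  - intros s [->| ->]; rewrite E; apply anti_mono; auto; apply U; [left|right]; auto.
  - intros c Hc Lc. rewrite <- (nn c Hc). rewrite E. apply anti_mono; auto using neg_test.
    apply L; [apply neg_test|]. intros s [->| ->].
    + rewrite <- (nn a Ha). apply anti_mono; auto using neg_test. apply Lc; left; auto.
    + rewrite <- (nn b Hb). apply anti_mono; auto using neg_test. apply Lc; right; auto.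
Qed.

End S.

Theorem lemma3p6 (K : Type) (sup : (K -> Prop) -> K) (mul : K -> K -> K)
  (inv : K -> K) (neg : K -> K) (e : K)
  (HK : semi_Foulis sup mul inv neg e)
  (u : K) (Hu : tests neg u) :
  forall v, tests neg v ->
  forall j, is_lub_in (tests neg) (tle sup neg) (pair_set (neg u) v) j ->
  is_glb_in (tests neg) (tle sup neg) (pair_set u j) (act mul neg u v).
Proof.
  intros v Hv j Hj.
  assert (Hj' := tjoin_lub sup mul inv neg e HK (neg u) v (neg_test neg u) Hv).
  assert (Ej : j = neg (neg (sup (pair_set (neg u) v)))).
  { destruct Hj as [Cj [Uj Lj]]. destruct Hj' as [Cm [Um Lm]].
    apply (tle_anti sup mul inv neg e HK); auto. }
  assert (Hjt : tests neg j) by (destruct Hj; auto).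
  assert (A4 : forall x y, neg (neg (mul (neg (neg x)) y))
               = neg (sup (pair_set (neg x) (neg (sup (pair_set (neg x) y)))))).
  { destruct HK as [[_ [_ [_ [_ A]]]] _]. exact A. }
  unfold act. pose proof (A4 u v) as H. rewrite (nn sup mul inv neg e HK u Hu) in H.
  rewrite H.
  replace (neg (sup (pair_set (neg u) v))) with (neg j).
  2:{ rewrite Ej. apply (nn sup mul inv neg e HK). apply neg_test. }
  pose proof (demorgan sup mul inv neg e HK (neg u) (neg j) (neg_test neg u) (neg_test neg j)) as D.
  rewrite (nn sup mul inv neg e HK u Hu), (nn sup mul inv neg e HK j Hjt) in D.
  exact D.
Qed.
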